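(* Let $\mathbb{F}\in\{\mathbb{R},\mathbb{C}\}$, let $\boldsymbol A\in\mathbb{F}^{m\times n}$ with $m<n$, and let $k\in\{1,\dots,n\}$ be an integer. Suppose there exist a map $\Delta:\mathbb{R}^m\to\mathbb{F}^n$ and a constant $c_0>0$ such that \[ \mathrm{dist}(\Delta(|\boldsymbol A\boldsymbol x|),\boldsymbol x)\le c_0\,\sigma_k(\boldsymbol x)_2\qquad\text{for all }\boldsymbol x\in\mathbb{F}^n . \] Then $m\ge c\,n$ for a constant $c>0$ depending only on $c_0$.
   Context: $|\boldsymbol u|$ is the entrywise modulus. $\mathrm{dist}(\boldsymbol x,\boldsymbol y)=\min_{c\in\mathbb F,|c|=1}\|\boldsymbol x-c\boldsymbol y\|_2$. $\Sigma_k=\{\boldsymbol z\in\mathbb F^n:\|\boldsymbol z\|_0\le k\}$, $\sigma_k(\boldsymbol x)_2=\min_{\boldsymbol z\in\Sigma_k}\mathrm{dist}(\boldsymbol x,\boldsymbol z)$. *)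

(* Defs.v *)
From HB Require Import structures.
From mathcomp Require Import all_boot all_order all_algebra.
From mathcomp Require Import classical_sets reals.
From mathcomp Require Export complex.
Set Implicit Arguments. Unset Strict Implicit. Unset Printing Implicit Defensive.
Import Order.TTheory GRing.Theory Num.Theory.
Local Open Scope ring_scope.
Local Open Scope classical_set_scope.

Section PhaseDefs.
(* F is the scalar field (R or C), modF : F -> R its modulus. *)
Variables (R : realType) (F : nzRingType) (modF : F -> R).

Definition vmod m (u : 'cV[F]_m) : 'cV[R]_m := \col_i modF (u i ord0).

Definition norm2 n (u : 'cV[F]_n) : R := Num.sqrt (\sum_i modF (u i ord0) ^+ 2).

Definition pdist n (x y : 'cV[F]_n) : R :=
  inf [set norm2 (x - c *: y) | c in [set c : F | modF c = 1]].

Definition sparse k n (z : 'cV[F]_n) : bool := (#|[pred i : 'I_n | z i ord0 != 0%R]| <= k)%N.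

Definition sigmak k n (x : 'cV[F]_n) : R :=
  inf [set pdist x z | z in [set z : 'cV[F]_n | sparse k z]].

Definition instance_optimal m n k (A : 'M[F]_(m, n)) (Delta : 'cV[R]_m -> 'cV[F]_n) (c0 : R) :=
  forall x : 'cV[F]_n, pdist (Delta (vmod (A *m x))) x <= c0 * sigmak k x.
End PhaseDefs.

(* Main.v *)
Require Import Defs.
From HB Require Import structures.
From mathcomp Require Import all_boot all_order all_algebra.
From mathcomp Require Import classical_sets reals.
From mathcomp Require Import complex.
From mathcomp Require Import spectral sesquilinear ring lra.
Import Order.TTheory GRing.Theory Num.Theory.
Local Open Scope ring_scope.

Section Core.
Local Open Scope sesquilinear_scope.
Lemma core (C : numClosedFieldType) m n (A : 'M[C]_(m,n)) (a b : C) :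
  (m < n)%N -> 0 < a ->
  (forall h : 'cV[C]_n, A *m h = 0 -> forall j,
      a * `|h j ord0| ^+ 2 <= b * \sum_i `|h i ord0| ^+ 2) ->
  a * (n - m)%:R <= b * n%:R.
Proof.
move=> mn a0 H.
set K := kermx A^T.
set U := schmidt (row_base K).
have Uu : U *m U ^t* = 1%:M.
  apply/unitarymxP; apply: schmidt_unitarymx; exact: rank_leq_col.
have UK : U *m A^T = 0.
  apply/eqP; rewrite -sub_kermx -/K.
  by rewrite (eqmx_schmidt_free (row_base_free K)) eq_row_base.
have dge : (n - m <= \rank K)%N.
  by rewrite /K mxrank_ker mxrank_tr leq_sub2l // rank_leq_row.
pose s j := \sum_l U l j * (U l j)^*.
have s_ge0 j : 0 <= s j.
  by apply: sumr_ge0 => l _; rewrite -normCK exprn_ge0.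
have key j : a * s j ^+ 2 <= b * s j.
  pose r := \row_l (U l j)^*.
  pose h := (r *m U)^T.
  have hk : A *m h = 0.
    by rewrite /h trmx_mul mulmxA -(trmxK A) -trmx_mul UK trmx0 mul0mx.
  have hj : h j ord0 = s j.
    by rewrite /h !mxE; apply: eq_bigr => l _; rewrite mxE mulrC.
  have hn : \sum_i `|h i ord0| ^+ 2 = s j.
    pose M := (r *m U) *m (r *m U) ^t*.
    transitivity (M ord0 ord0); rewrite /M.
      rewrite [in RHS]mxE; apply: eq_bigr => i _.
      by rewrite normCK !mxE.
    have e : (r *m U) ^t* = U ^t* *m r ^t*.
      by rewrite trmx_mul map_mxM.
    rewrite e mulmxA -(mulmxA _ U) Uu mulmx1.
    rewrite !mxE; apply: eq_bigr => l _.
    by rewrite !mxE conjCK mulrC.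
  have := H h hk j.
  by rewrite hn hj ger0_norm.
have sumS : \sum_j s j = (\rank K)%:R.
  rewrite /s exchange_big /=.
  transitivity (\sum_(l < \rank K) (U *m U ^t*) l l).
    by apply: eq_bigr => l _; rewrite mxE; apply: eq_bigr => i _; rewrite !mxE.
  rewrite Uu (eq_bigr (fun=> 1)); last by move=> l _; rewrite mxE eqxx.
  by rewrite sumr_const card_ord.
have [j0 sj0|allz] := pickP (fun j => s j != 0).
  have sp : 0 < s j0 by rewrite lt_def sj0 s_ge0.
  have bp : a * s j0 <= b.
    by rewrite -(ler_pM2r sp) mulrAC -mulrA -expr2 key.
  have aj j : a * s j <= b.
    have := s_ge0 j; rewrite le0r => /orP[/eqP->|sp'].
      by rewrite mulr0; apply: le_trans bp; rewrite mulr_ge0 // ltW.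
    by rewrite -(ler_pM2r sp') mulrAC -mulrA -expr2 key.
  apply: (@le_trans _ _ (a * (\rank K)%:R)).
    by rewrite ler_pM2l // ler_nat.
  rewrite -sumS mulr_sumr mulr_natr -[n in b *+ n]card_ord -sumr_const.
  by apply: ler_sum => j _; exact: aj.
exfalso.
have : (\rank K)%:R = 0 :> C.
  by rewrite -sumS big1 // => j _; have := allz j => /= /negbFE/eqP.
move/eqP; rewrite pnatr_eq0 => /eqP rk0.
by move: dge; rewrite rk0 leqn0 subn_eq0 leqNgt mn.
Qed.
End Core.

Section NSPs.
Local Open Scope classical_set_scope.
Section NSP.
Variables (R : realType) (F : nzRingType) (modF : F -> R).
Hypotheses (m0 : modF 0 = 0) (m1 : modF 1 = 1)
  (mM : forall x y, modF (x * y) = modF x * modF y)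
  (mN : forall x, modF (- x) = modF x) (mge0 : forall x, 0 <= modF x)
  (meq0 : forall x, modF x = 0 -> x = 0).

Lemma norm2_ge0 n (u : 'cV[F]_n) : 0 <= norm2 modF u.
Proof. exact: sqrtr_ge0. Qed.

Lemma pdist_ge0 n (x y : 'cV[F]_n) : 0 <= pdist modF x y.
Proof.
apply: lb_le_inf.
  by exists (norm2 modF (x - 1 *: y)); exists 1.
by move=> _ [c _ <-]; exact: norm2_ge0.
Qed.

Lemma pdist_le n (x y : 'cV[F]_n) c : modF c = 1 -> pdist modF x y <= norm2 modF (x - c *: y).
Proof.
move=> hc; apply: ge_inf; last by exists c.
by exists 0 => _ [c' _ <-]; exact: norm2_ge0.
Qed.

Lemma pdist_lb n (x y : 'cV[F]_n) l :
  (forall c, modF c = 1 -> l <= norm2 modF (x - c *: y)) -> l <= pdist modF x y.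
Proof.
move=> H; apply: lb_le_inf.
  by exists (norm2 modF (x - 1 *: y)); exists 1.
by move=> _ [c hc <-]; exact: H.
Qed.

Lemma sigmak_le k n (x z : 'cV[F]_n) : sparse k z -> sigmak modF k x <= pdist modF x z.
Proof.
move=> hz; apply: ge_inf; last by exists z.
by exists 0 => _ [z' _ <-]; exact: pdist_ge0.
Qed.

Lemma norm2_eq0 n (u : 'cV[F]_n) : norm2 modF u <= 0 -> u = 0.
Proof.
move=> h.
have h0 : \sum_i modF (u i ord0) ^+ 2 = 0.
  apply/eqP; rewrite eq_le sumr_ge0 ?andbT; last by move=> i _; rewrite exprn_ge0.
  by rewrite -sqrtr_eq0 eq_le h sqrtr_ge0.
apply/matrixP => i j; rewrite (ord1 j) mxE; apply: meq0.
have /psumr_eq0P := h0; move=> /(_ (fun i _ => exprn_ge0 2 (mge0 _)) i isT) /eqP.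
by rewrite sqrf_eq0 => /eqP.
Qed.

Lemma nsp m n k (A : 'M[F]_(m,n)) Delta c0 : 0 < c0 -> (1 <= k)%N ->
  instance_optimal modF k A Delta c0 ->
  forall h : 'cV[F]_n, A *m h = 0 -> forall j,
  c0 ^+ 2 * modF (h j ord0) ^+ 2 <= (c0 ^+ 2 - 1) * \sum_i modF (h i ord0) ^+ 2.
Proof.
move=> c0p k1 IO h hk j.
have sig0 : sigmak modF k (0 : 'cV[F]_n) <= 0.
  have sp0 : sparse k (0 : 'cV[F]_n).
    by rewrite /sparse (@eq_card _ _ pred0) ?card0 // => i; rewrite !inE mxE eqxx.
  apply: le_trans (@sigmak_le k n 0 0 sp0) _.
  apply: le_trans (@pdist_le n 0 0 1 m1) _.
  by rewrite scaler0 subrr /norm2 big1 ?sqrtr0 // => i _; rewrite mxE m0 expr0n.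
set y := Delta (vmod modF (A *m 0)).
have y0 : y = 0.
  apply: norm2_eq0; have := IO 0; rewrite -/y => H.
  have : pdist modF y 0 <= 0.
    by apply: le_trans H _; rewrite pmulr_rle0 // .
  apply: le_trans; apply: pdist_lb => c _; rewrite scaler0 subr0 //.
have := IO h; rewrite hk -(mulmx0 _ A) -/y y0 => H.
set t := modF (h j ord0) ^+ 2.
set T := \sum_(i | i != j) modF (h i ord0) ^+ 2.
have St : \sum_i modF (h i ord0) ^+ 2 = t + T by rewrite (bigD1 j).
have T0 : 0 <= T by apply: sumr_ge0 => i _; rewrite exprn_ge0.
have t0 : 0 <= t by rewrite exprn_ge0.
have lb : norm2 modF h <= pdist modF 0 h.
  apply: pdist_lb => c hc; rewrite /norm2.
  have -> : \sum_i modF ((0 - c *: h) i ord0) ^+ 2 = \sum_i modF (h i ord0) ^+ 2.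
    by apply: eq_bigr => i _; rewrite !mxE sub0r mN mM hc mul1r.
  by [].
pose z := \col_i (if i == j then h i ord0 else 0).
have spz : sparse k z.
  rewrite /sparse; apply: leq_trans k1; rewrite -[X in (_ <= X)%N](card1 j).
  apply: subset_leq_card. apply/fintype.subsetP => i; rewrite !inE mxE.
  by case: (i == j) => //; rewrite eqxx.
have ub : sigmak modF k h <= Num.sqrt T.
  apply: le_trans (@sigmak_le k n h z spz) _.
  apply: le_trans (@pdist_le n h z 1 m1) _.
  rewrite /norm2; have -> : \sum_i modF ((h - 1 *: z) i ord0) ^+ 2 = T.
    rewrite (bigD1 j) //= !mxE eqxx mul1r subrr m0 expr0n add0r.
    by apply: eq_bigr => i ij; rewrite !mxE (negbTE ij) mulr0 subr0.
  by [].
have H2 : Num.sqrt (t + T) <= c0 * Num.sqrt T.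
  rewrite -St; apply: le_trans lb (le_trans H _).
  by rewrite ler_pM2l.
have H3 : t + T <= c0 ^+ 2 * T.
  have := ler_pM (sqrtr_ge0 _) (sqrtr_ge0 _) H2 H2.
  by rewrite -!expr2 exprMn !sqr_sqrtr // addr_ge0.
rewrite St; set c2 := c0 ^+ 2 in H3 *.
nra.
Qed.
End NSP.
End NSPs.

Lemma finish (R : realType) (c0 : R) m n (A : 'M[R[i]]_(m,n)) : 0 < c0 -> (m < n)%N ->
  (forall h : 'cV[R[i]]_n, A *m h = 0 -> forall j,
     c0 ^+ 2 * ComplexField.Normc.normc (h j ord0) ^+ 2 <=
     (c0 ^+ 2 - 1) * \sum_i ComplexField.Normc.normc (h i ord0) ^+ 2) ->
  (c0 ^+ 2)^-1 * n%:R <= m%:R.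
Proof.
move=> c0p mn H.
have := @core _ m n A (c0 ^+ 2)%:C%C (c0 ^+ 2 - 1)%:C%C mn.
have a0 : 0 < (c0 ^+ 2)%:C%C :> R[i] by rewrite ltcR exprn_gt0.
move=> /(_ a0) hc.
have : (c0 ^+ 2)%:C%C * (n - m)%:R <= (c0 ^+ 2 - 1)%:C%C * n%:R.
  apply: hc => h hk j.
  have e : forall z : R[i], `|z| ^+ 2 = (ComplexField.Normc.normc z ^+ 2)%:C%C.
    by move=> z; rewrite rmorphXn.
  under eq_bigr do rewrite e.
  by rewrite e -rmorph_sum -!rmorphM lecR; exact: H.
have e1 : ((n - m)%:R : R[i]) = ((n - m)%:R : R)%:C%C by rewrite rmorph_nat.
have e2 : (n%:R : R[i]) = (n%:R : R)%:C%C by rewrite rmorph_nat.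
move=> E.
move: E; rewrite e1 e2 -rmorphM -[X in _ <= X]rmorphM. rewrite lecR => E'.
rewrite natrB in E'; last exact: ltnW.
clear -E' c0p.
have c2p : 0 < c0 ^+ 2 by rewrite exprn_gt0.
rewrite mulrC ler_pdivrMr // mulrC.
by move: E'; rewrite mulrBr mulrBl mul1r lerD2l lerN2.
Qed.

Lemma Re_sumM (R : realType) n (a : 'I_n -> R) (w : 'I_n -> R[i]) :
  complex.Re (\sum_k (a k)%:C%C * w k) = \sum_k a k * complex.Re (w k).
Proof.
elim/big_rec2: _ => [//|k x z _ <-].
by case: (w k) => p q; case: z => p' q' /=; rewrite mul0r subr0.
Qed.

Lemma Im_sumM (R : realType) n (a : 'I_n -> R) (w : 'I_n -> R[i]) :
  complex.Im (\sum_k (a k)%:C%C * w k) = \sum_k a k * complex.Im (w k).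
Proof.
elim/big_rec2: _ => [//|k x z _ <-].
by case: (w k) => p q; case: z => p' q' /=; rewrite mul0r addr0.
Qed.

Theorem proposition2p10 (R : realType) (c0 : R) (hc0 : 0 < c0) :
  exists c : R, 0 < c /\
    (forall (m n k : nat) (A : 'M[R]_(m, n)) (Delta : 'cV[R]_m -> 'cV[R]_n),
        (m < n)%N -> (1 <= k <= n)%N ->
        instance_optimal (fun t : R => `|t|) k A Delta c0 ->
        c * n%:R <= m%:R) /\
    (forall (m n k : nat) (A : 'M[R[i]]_(m, n)) (Delta : 'cV[R]_m -> 'cV[R[i]]_n),
        (m < n)%N -> (1 <= k <= n)%N ->
        instance_optimal (@ComplexField.Normc.normc R) k A Delta c0 ->
        c * n%:R <= m%:R).
Proof.
exists (c0 ^+ 2)^-1; split; first by rewrite invr_gt0 exprn_gt0.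
split.
- move=> m n k A Delta mn /andP[k1 _] IO.
  have hr := @nsp R R (fun t : R => `|t|) (normr0 _) (normr1 _)
    (fun x y => normrM x y) (fun x => normrN x) (fun x => normr_ge0 x)
    (fun x (e : `|x| = 0) => normr0_eq0 e) m n k A Delta c0 hc0 k1 IO.
  apply: (@finish R c0 m n (map_mx (real_complex R) A) hc0 mn) => h hk j.
  pose u := map_mx (@complex.Re R) h; pose v := map_mx (@complex.Im R) h.
  have hu : A *m u = 0.
    apply/matrixP => i l; have := congr1 (fun M : 'M[R[i]]_(m,1) => complex.Re (M i l)) hk.
    rewrite /= !mxE (eq_bigr (fun k => (A i k)%:C%C * h k l)); last by move=> k' _; rewrite mxE.
    rewrite Re_sumM => E; rewrite [RHS](_ : 0 = complex.Re (0 : R[i])) // -E.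
    by apply: eq_bigr => k' _; rewrite !mxE.
  have hv : A *m v = 0.
    apply/matrixP => i l; have := congr1 (fun M : 'M[R[i]]_(m,1) => complex.Im (M i l)) hk.
    rewrite /= !mxE (eq_bigr (fun k => (A i k)%:C%C * h k l)); last by move=> k' _; rewrite mxE.
    rewrite Im_sumM => E; rewrite [RHS](_ : 0 = complex.Im (0 : R[i])) // -E.
    by apply: eq_bigr => k' _; rewrite !mxE.
  have nc : forall z : R[i], ComplexField.Normc.normc z ^+ 2 = `|complex.Re z| ^+ 2 + `|complex.Im z| ^+ 2.
    by case=> p q; rewrite /= !real_normK ?num_real // sqr_sqrtr // addr_ge0 ?sqr_ge0.
  have := lerD (hr u hu j) (hr v hv j).
  rewrite !mxE -mulrDr nc -mulrDr -big_split /=.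
  move=> E; apply: le_trans E _; rewrite le_eqVlt; apply/predU1P; left.
  by congr (_ * _); apply: eq_bigr => i _; rewrite !mxE nc.
- move=> m n k A Delta mn /andP[k1 _] IO.
  apply: (@finish R c0 m n A hc0 mn).
  apply: (@nsp R _ _ _ _ _ _ _ _ m n k A Delta c0 hc0 k1 IO).
  + exact: ComplexField.Normc.normc0.
  + exact: ComplexField.Normc.normc1.
  + exact: ComplexField.Normc.normcM.
  + exact: normcN.
  + by case=> p q; exact: sqrtr_ge0.
  + exact: ComplexField.Normc.eq0_normc.
Qed.
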